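(* Let $\Sigma$ be a subshift and let $\mathcal G$ be a proper subset of $\mathcal L(\Sigma)$ containing the empty word. If $\mathcal G$ has (W')-specification with gap size $t$, then $\mathcal G$ has (W)-specification with gap size $t$.
   Context: $\Sigma\subset\{0,\ldots,m-1\}^{\mathbb N}$ or $\{0,\ldots,m-1\}^{\mathbb Z}$ is a closed shift-invariant set; $\mathcal L(\Sigma)$ is the set of the empty word $\emptyset$ (with $\emptyset w=w\emptyset=w$, $|\emptyset|=0$) and all finite words appearing in elements of $\Sigma$. (W)-specification: a proper subset $\mathcal G\subset\mathcal L(\Sigma)$ has (W)-specification with gap size $t\geq0$ if for every integer $k\geq2$ and all $v^1,\ldots,v^k\in\mathcal G$ there are $w^1,\ldots,w^{k-1}\in\mathcal L(\Sigma)$ with $|w^i|\leq t$ and $v^1w^1v^2w^2\cdots w^{k-1}v^k\in\mathcal L(\Sigma)$. (W')-specification: a subset $\mathcal G\subset\mathcal L(\Sigma)$ containing the empty word has (W')-specification with gap size $t\ge0$ if for all integers $j,k\geq2$, all $v^1,\ldots,v^{j+k}\in\mathcal G$ and all $w^1,\ldots,w^{j+k-1}\in\mathcal L(\Sigma)$ with $|w^i|\leq t$ such that $u:=v^1w^1v^2\cdots w^{j-1}v^j\in\mathcal L(\Sigma)$ and $v:=v^{j+1}w^{j+1}\cdots w^{j+k-1}v^{j+k}\in\mathcal L(\Sigma)$, there is $w\in\mathcal L(\Sigma)$ with $|w|\leq t$ and $uwv\in\mathcal L(\Sigma)$. *)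

(* Defs.v *)
From mathcomp Require Import all_boot all_algebra.
Set Implicit Arguments. Unset Strict Implicit. Unset Printing Implicit Defensive.
Import GRing.Theory Num.Theory.

Definition word (m : nat) := seq 'I_m.

Definition onesided_shift_invariant m (S : (nat -> 'I_m) -> Prop) : Prop :=
  forall x, S x -> S (fun n => x n.+1).

(* closed in the product topology of discrete spaces *)
Definition onesided_closed m (S : (nat -> 'I_m) -> Prop) : Prop :=
  forall x : nat -> 'I_m,
    (forall N : nat, exists y, S y /\ forall n, n < N -> y n = x n) -> S x.

Definition onesided_subshift m (S : (nat -> 'I_m) -> Prop) : Prop :=
  onesided_closed S /\ onesided_shift_invariant S.

Definition appears_nat m (w : word m) (x : nat -> 'I_m) : Prop :=
  exists i : nat, forall k (hk : k < size w), x (i + k) = tnth (in_tuple w) (Ordinal hk).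

Definition lang_onesided m (S : (nat -> 'I_m) -> Prop) (w : word m) : Prop :=
  w = [::] \/ exists x, S x /\ appears_nat w x.

Definition twosided_shift_invariant m (S : (int -> 'I_m) -> Prop) : Prop :=
  forall x, S x <-> S (fun n => x (n + 1)%R).

Definition twosided_closed m (S : (int -> 'I_m) -> Prop) : Prop :=
  forall x : int -> 'I_m,
    (forall N : nat, exists y, S y /\
       forall n : int, (`|n|%N <= N)%N -> y n = x n) -> S x.

Definition twosided_subshift m (S : (int -> 'I_m) -> Prop) : Prop :=
  twosided_closed S /\ twosided_shift_invariant S.

Definition appears_int m (w : word m) (x : int -> 'I_m) : Prop :=
  exists i : int, forall k (hk : k < size w),
    x (i + k%:Z)%R = tnth (in_tuple w) (Ordinal hk).

Definition lang_twosided m (S : (int -> 'I_m) -> Prop) (w : word m) : Prop :=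
  w = [::] \/ exists x, S x /\ appears_int w x.

Definition is_subshift_language m (Lang : word m -> Prop) : Prop :=
  (exists S, onesided_subshift S /\ forall w, Lang w <-> lang_onesided S w) \/
  (exists S, twosided_subshift S /\ forall w, Lang w <-> lang_twosided S w).

(* glue v1 [w1;...;wn] [v2;...;v(n+1)] = v1 w1 v2 w2 ... wn v(n+1)
   (used with size ws = size vs). *)
Definition glue m (v1 : word m) (ws vs : seq (word m)) : word m :=
  v1 ++ flatten (map (fun p => p.1 ++ p.2) (zip ws vs)).

Definition gaps_ok m (Lang : word m -> Prop) (t : nat) (ws : seq (word m)) : Prop :=
  forall w, w \in ws -> Lang w /\ size w <= t.

Definition proper_subset m (G Lang : word m -> Prop) : Prop :=
  (forall w, G w -> Lang w) /\ exists w, Lang w /\ ~ G w.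

(* (W)-specification with gap size t (k = size vs + 1 >= 2 words). *)
Definition W_spec m (Lang G : word m -> Prop) (t : nat) : Prop :=
  proper_subset G Lang /\
  forall (v1 : word m) (vs : seq (word m)),
    1 <= size vs -> G v1 -> (forall v, v \in vs -> G v) ->
    exists ws : seq (word m),
      size ws = size vs /\ gaps_ok Lang t ws /\ Lang (glue v1 ws vs).

(* (W')-specification with gap size t: u = v1 w1 ... vj (j = size vs1 + 1 >= 2),
   wj the j-th gap word, v = v(j+1) w(j+1) ... v(j+k) (k = size vs2 + 1 >= 2). *)
Definition W'_spec m (Lang G : word m -> Prop) (t : nat) : Prop :=
  (forall w, G w -> Lang w) /\ G [::] /\
  forall (v1 : word m) (vs1 ws1 : seq (word m)) (wj : word m)
         (v1' : word m) (vs2 ws2 : seq (word m)),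
    1 <= size vs1 -> 1 <= size vs2 ->
    G v1 -> (forall v, v \in vs1 -> G v) ->
    G v1' -> (forall v, v \in vs2 -> G v) ->
    size ws1 = size vs1 -> size ws2 = size vs2 ->
    gaps_ok Lang t ws1 -> gaps_ok Lang t ws2 -> Lang wj -> size wj <= t ->
    Lang (glue v1 ws1 vs1) -> Lang (glue v1' ws2 vs2) ->
    exists w : word m, Lang w /\ size w <= t /\
      Lang (glue v1 ws1 vs1 ++ w ++ glue v1' ws2 vs2).

(* Main.v *)
Require Import Defs.
From mathcomp Require Import all_boot all_algebra.

Lemma glue_rcons m (v1 : word m) ws vs w v :
  size ws = size vs ->
  glue v1 (rcons ws w) (rcons vs v) = glue v1 ws vs ++ w ++ v.
Proof.
move=> Hs; rewrite /glue zip_rcons // map_rcons -cats1 flatten_cat /=.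
by rewrite cats0 !catA.
Qed.

Lemma glue_nil1 m (v1 : word m) ws vs :
  size ws = size vs ->
  glue v1 (rcons ws [::]) (rcons vs [::]) = glue v1 ws vs.
Proof. by move=> Hs; rewrite glue_rcons //= cats0. Qed.

Theorem lemma2p3 (m : nat) (Lang G : word m -> Prop) (t : nat) :
  is_subshift_language Lang ->
  proper_subset G Lang -> G [::] ->
  W'_spec Lang G t -> W_spec Lang G t.
Proof.
move=> _ Hp G0 [GL [_ HW]]; split => // v1 vs _ Gv1.
elim/last_ind: vs => [|vs v IH] Hvs.
  exists [::]; split => //; split; first by move=> w; rewrite in_nil.
  by rewrite /glue /= cats0; apply: GL.
have [ws [Hs [Hg HL]]] : exists ws : seq (word m),
      size ws = size vs /\ gaps_ok Lang t ws /\ Lang (glue v1 ws vs).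
  by apply: IH => x Hx; apply: Hvs; rewrite mem_rcons inE Hx orbT.
have Gv : G v by apply: Hvs; rewrite mem_rcons inE eqxx.
have L0 : Lang [::] by apply: GL.
have gok : gaps_ok Lang t [:: [::]] by move=> w; rewrite inE => /eqP ->.
have Hvs' : forall x, x \in rcons vs [::] -> G x.
  move=> x; rewrite mem_rcons inE => /orP [/eqP ->|Hx] //; apply: Hvs.
  by rewrite mem_rcons inE Hx orbT.
have Hg' : gaps_ok Lang t (rcons ws [::]).
  by move=> x; rewrite mem_rcons inE => /orP [/eqP ->|Hx] //; exact: Hg.
have Gvs2 : forall x, x \in [:: [::]] -> G x by move=> x; rewrite inE => /eqP ->.
have Lu : Lang (glue v1 (rcons ws [::]) (rcons vs [::])) by rewrite glue_nil1.
have Lv : Lang (glue v [:: [::]] [:: [::]]) by rewrite /glue /= !cats0; apply: GL.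
have s1 : 1 <= size (rcons vs [::]) by rewrite size_rcons.
have s2 : size (rcons ws [::]) = size (rcons vs [::]) by rewrite !size_rcons Hs.
have [w [Lw [sw Hw]]] := HW v1 (rcons vs [::]) (rcons ws [::]) [::] v [:: [::]] [:: [::]]
  s1 is_true_true Gv1 Hvs' Gv Gvs2 s2 erefl Hg' gok L0 (leq0n t) Lu Lv.
exists (rcons ws w); split; first by rewrite !size_rcons Hs.
split.
  by move=> x; rewrite mem_rcons inE => /orP [/eqP ->|Hx] //; exact: Hg.
rewrite glue_rcons //; move: Hw; rewrite glue_nil1 // /glue /= !cats0.
by rewrite /glue.
Qed.
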